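(* Let $G$ and $H$ be finite simple graphs. Two vertices $(g,h)$ and $(g',h')$ of $G\diamond H$ satisfy $N_{G\diamond H}[(g,h)]=N_{G\diamond H}[(g',h')]$ if and only if (i) $N_G[g]=N_G[g']$ and $N_H[h]=N_H[h']$, or (ii) $\{g,g'\}$ is a $\gamma_G$-pair and $\{h,h'\}$ is a $\gamma_H$-pair.
   Context: The modular product $G\diamond H$ has vertex set $V(G)\times V(H)$; distinct vertices $(g,h)$ and $(g',h')$ are adjacent iff ($g=g'$ and $hh'\in E(H)$), or ($gg'\in E(G)$ and $h=h'$), or ($gg'\in E(G)$ and $hh'\in E(H)$), or ($g\neq g'$, $h\neq h'$, $gg'\notin E(G)$ and $hh'\notin E(H)$). $N_X[v]$ denotes the closed neighborhood of $v$ in a graph $X$. A $\gamma_G$-pair is a set $\{g,g'\}$ of two distinct vertices of $G$ such that $N_G[g]\cap N_G[g']=\emptyset$ and $N_G[g]\cup N_G[g']=V(G)$ (i.e. the two closed neighborhoods partition $V(G)$). *)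

(* Defs.v *)
From mathcomp Require Import all_boot.
Set Implicit Arguments. Unset Strict Implicit. Unset Printing Implicit Defensive.

Definition simple_graph (T : finType) (e : rel T) : Prop :=
  symmetric e /\ irreflexive e.

Definition closed_nbhd (T : finType) (e : rel T) (v : T) : {set T} :=
  [set u | (u == v) || e v u].

Definition modular_rel (G H : finType) (eG : rel G) (eH : rel H) : rel (G * H) :=
  fun x y =>
    (x != y) &&
    [|| (x.1 == y.1) && eH x.2 y.2,
        eG x.1 y.1 && (x.2 == y.2),
        eG x.1 y.1 && eH x.2 y.2
      | [&& x.1 != y.1, x.2 != y.2, ~~ eG x.1 y.1 & ~~ eH x.2 y.2]].

Definition gamma_pair (T : finType) (e : rel T) (g g' : T) : Prop :=
  g != g' /\
  closed_nbhd e g :&: closed_nbhd e g' = set0 /\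
  closed_nbhd e g :|: closed_nbhd e g' = [set: T].

(* Main.v *)
Require Import Defs.
From mathcomp Require Import all_boot.

Lemma nbhdE (G H : finType) (eG : rel G) (eH : rel H)
  (hG : simple_graph eG) (hH : simple_graph eH) (g : G) (h : H) (x : G * H) :
  (x \in closed_nbhd (modular_rel eG eH) (g, h)) =
  ((x.1 \in closed_nbhd eG g) == (x.2 \in closed_nbhd eH h)).
Proof.
case: x => x1 x2; rewrite /closed_nbhd !inE /modular_rel /=.
case: hG => _ iG; case: hH => _ iH.
have [->|n1] := eqVneq x1 g; have [->|n2] := eqVneq x2 h.
all: rewrite ?xpair_eqE /= ?eqxx ?iG ?iH ?(eq_sym g) ?(eq_sym h) ?(negbTE n1) ?(negbTE n2) /=.
all: by case: (eG g x1); case: (eH h x2).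
Qed.

Lemma gammaE (T : finType) (e : rel T) (g g' : T) :
  gamma_pair e g g' <-> (forall x, (x \in closed_nbhd e g') = ~~ (x \in closed_nbhd e g)).
Proof.
split.
- case=> _ [hI hU] x.
  move/setP: hI => /(_ x); move/setP: hU => /(_ x); rewrite in_setI in_setU in_set0 in_setT.
  by case: (x \in closed_nbhd e g); case: (x \in closed_nbhd e g').
- move=> hx; split; [|split].
  + apply/negP => /eqP E; move: (hx g); rewrite E.
    by rewrite /closed_nbhd inE eqxx.
  + by apply/setP => x; rewrite ?in_setI ?in_setU ?in_set0 ?in_setT hx; case: (x \in closed_nbhd e g).
  + by apply/setP => x; rewrite ?in_setI ?in_setU ?in_set0 ?in_setT hx; case: (x \in closed_nbhd e g).
Qed.

Theorem mainTheorem2 (G H : finType) (eG : rel G) (eH : rel H)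
  (hG : simple_graph eG) (hH : simple_graph eH) (g g' : G) (h h' : H) :
  closed_nbhd (modular_rel eG eH) (g, h) = closed_nbhd (modular_rel eG eH) (g', h')
  <->
  ((closed_nbhd eG g = closed_nbhd eG g' /\ closed_nbhd eH h = closed_nbhd eH h')
   \/ (gamma_pair eG g g' /\ gamma_pair eH h h')).
Proof.
have gG := @gammaE _ eG g g'; have gH := @gammaE _ eH h h'.
have gA : g \in closed_nbhd eG g by rewrite inE eqxx.
have hB : h \in closed_nbhd eH h by rewrite inE eqxx.
split.
- move/setP=> E.
  have E2 : forall x y, ((x \in closed_nbhd eG g) == (y \in closed_nbhd eH h)) =
                        ((x \in closed_nbhd eG g') == (y \in closed_nbhd eH h')).
    by move=> x y; move: (E (x, y)); rewrite !nbhdE.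
  case Ag: (g \in closed_nbhd eG g').
  + left; split; apply/setP.
    * move=> x; move: (E2 x h) (E2 g h); rewrite gA Ag.
      by case: (x \in closed_nbhd eG g); case: (x \in closed_nbhd eG g'); case: (h \in closed_nbhd eH h'); case: (h \in closed_nbhd eH h).
    * move=> y; move: (E2 g y) (E2 g h); rewrite gA Ag.
      by case: (y \in closed_nbhd eH h); case: (y \in closed_nbhd eH h'); case: (h \in closed_nbhd eH h').
  + right; split.
    * apply/gG; move=> x; move: (E2 x h) (E2 g h); rewrite gA Ag.
      by case: (x \in closed_nbhd eG g); case: (x \in closed_nbhd eG g'); case: (h \in closed_nbhd eH h'); case: (h \in closed_nbhd eH h).
    * apply/gH; move=> y; move: (E2 g y) (E2 g h); rewrite gA Ag.
      by case: (y \in closed_nbhd eH h); case: (y \in closed_nbhd eH h'); case: (h \in closed_nbhd eH h').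
- case=> [[EA EB]|[/gG hx /gH hy]]; first by apply/setP => z; rewrite !nbhdE // EA EB.
  apply/setP => z; rewrite !nbhdE // hx hy.
  by case: (z.1 \in closed_nbhd eG g); case: (z.2 \in closed_nbhd eH h).
Qed.
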